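(* Let $n\in\mathbb{N}$, let $M\models\mathrm{I}\Delta_0+\exp$, let $K\models\mathrm{I}\Sigma_n+\exp$, and suppose $M\subseteq_{\mathrm{e}}K$. The following are equivalent: (i) $K\models M\text{-}\mathrm{I}\Sigma_{n+1}$; (ii) for every $\Sigma_{n+1}$ formula $\phi(x)$ with parameters from $K$ and every $a\in M$, $K\models\exists c\,\forall x<a\,(\phi(x)\leftrightarrow x\in c)$; (iii) for every $\Pi_n$ formula $\theta(x,y)$ with parameters from $K$ and every $a\in M$, $K\models\exists b\,\forall x<a\,(\exists y\,\theta(x,y)\leftrightarrow\exists y<b\,\theta(x,y))$.
   Context: $M\subseteq_{\mathrm{e}}K$ means $K$ is an end extension of $M$ (every element of $K\setminus M$ exceeds every element of $M$). For $M\subseteq_{\mathrm{e}}K$ models of $\mathrm{I}\Delta_0+\exp$, $K\models M\text{-}\mathrm{I}\Sigma_{n+1}$ means: for every $\Sigma_{n+1}$ formula $\phi(x)$ with parameters from $K$ and every $a\in M$, $K\models \phi(0)\wedge\forall x<a(\phi(x)\to\phi(x+1))\to\forall x<a\,\phi(x)$. For elements $x,c$, ''$x\in c$'' means that the $x$-th digit of the binary expansion of $c$ is $1$. *)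

(* Defs.v *)
Set Implicit Arguments.


Inductive term : Type :=
| Var (i : nat)
| Zero
| One
| Add (s t : term)
| Mul (s t : term).

(* Binders (All, Ex, BAll, BEx) bind de Bruijn variable 0.
   [BAll t phi] is  (forall x < t) phi  and [BEx t phi] is (exists x < t) phi,
   where the bound [t] is interpreted OUTSIDE the binder. *)
Inductive formula : Type :=
| Eq (s t : term)
| Lt (s t : term)
| Not (p : formula)
| And (p q : formula)
| Or (p q : formula)
| Imp (p q : formula)
| All (p : formula)
| Ex (p : formula)
| BAll (t : term) (p : formula)
| BEx (t : term) (p : formula).

Fixpoint isDelta0 (p : formula) : Prop :=
  match p with
  | Eq _ _ | Lt _ _ => True
  | Not q => isDelta0 q
  | And q r | Or q r | Imp q r => isDelta0 q /\ isDelta0 r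
  | All _ | Ex _ => False
  | BAll _ q | BEx _ q => isDelta0 q
  end.

Inductive Sigma : nat -> formula -> Prop :=
| Sigma_D0 p : isDelta0 p -> Sigma 0 p
| Sigma_Pi n p : Pi n p -> Sigma (S n) p
| Sigma_Ex n p : Sigma (S n) p -> Sigma (S n) (Ex p)
with Pi : nat -> formula -> Prop :=
| Pi_D0 p : isDelta0 p -> Pi 0 p
| Pi_Sigma n p : Sigma n p -> Pi (S n) p
| Pi_All n p : Pi (S n) p -> Pi (S n) (All p).

Fixpoint term_fv_lt (k : nat) (t : term) : Prop :=
  match t with
  | Var i => i < k
  | Zero | One => True
  | Add s u | Mul s u => term_fv_lt k s /\ term_fv_lt k u
  end.

Fixpoint fv_lt (k : nat) (p : formula) : Prop :=
  match p with
  | Eq s t | Lt s t => term_fv_lt k s /\ term_fv_lt k t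
  | Not q => fv_lt k q
  | And q r | Or q r | Imp q r => fv_lt k q /\ fv_lt k r
  | All q | Ex q => fv_lt (S k) q
  | BAll t q | BEx t q => term_fv_lt k t /\ fv_lt (S k) q
  end.

Record structure : Type := Structure {
  carrier :> Type;
  zero : carrier;
  one : carrier;
  add : carrier -> carrier -> carrier;
  mul : carrier -> carrier -> carrier;
  lt : carrier -> carrier -> Prop
}.

Arguments zero {s}.
Arguments one {s}.
Arguments add {s}.
Arguments mul {s}.
Arguments lt {s}.

Definition le {K : structure} (x y : K) : Prop := lt x y \/ x = y.

Definition scons {A : Type} (x : A) (env : nat -> A) : nat -> A :=
  fun i => match i with 0 => x | S j => env j end.

Fixpoint eval {K : structure} (env : nat -> K) (t : term) : K :=
  match t with
  | Var i => env i
  | Zero => zero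
  | One => one
  | Add s u => add (eval env s) (eval env u)
  | Mul s u => mul (eval env s) (eval env u)
  end.

Fixpoint sat {K : structure} (env : nat -> K) (p : formula) : Prop :=
  match p with
  | Eq s t => eval env s = eval env t
  | Lt s t => lt (eval env s) (eval env t)
  | Not q => ~ sat env q
  | And q r => sat env q /\ sat env r
  | Or q r => sat env q \/ sat env r
  | Imp q r => sat env q -> sat env r
  | All q => forall x : K, sat (scons x env) q
  | Ex q => exists x : K, sat (scons x env) q
  | BAll t q => forall x : K, lt x (eval env t) -> sat (scons x env) q
  | BEx t q => exists x : K, lt x (eval env t) /\ sat (scons x env) q
  end.

(** PA^- : nonnegative parts of discretely ordered commutative rings (Kaye). *)
Definition PAminus (K : structure) : Prop :=
  (forall x y z : K, add (add x y) z = add x (add y z)) /\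
  (forall x y : K, add x y = add y x) /\
  (forall x y z : K, mul (mul x y) z = mul x (mul y z)) /\
  (forall x y : K, mul x y = mul y x) /\
  (forall x y z : K, mul x (add y z) = add (mul x y) (mul x z)) /\
  (forall x : K, add x zero = x) /\
  (forall x : K, mul x zero = zero) /\
  (forall x : K, mul x one = x) /\
  (forall x y z : K, lt x y -> lt y z -> lt x z) /\
  (forall x : K, ~ lt x x) /\
  (forall x y : K, lt x y \/ x = y \/ lt y x) /\
  (forall x y z : K, lt x y -> lt (add x z) (add y z)) /\
  (forall x y z : K, lt zero z -> lt x y -> lt (mul x z) (mul y z)) /\
  (forall x y : K, lt x y -> exists z, add x z = y) /\
  (lt (@zero K) one) /\
  (forall x : K, lt zero x -> le one x) /\
  (forall x : K, le zero x).

Definition ISigma_scheme (n : nat) (K : structure) : Prop :=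
  forall (p : formula), Sigma n p -> forall env : nat -> K,
    sat (scons zero env) p ->
    (forall x : K, sat (scons x env) p -> sat (scons (add x one) env) p) ->
    forall x : K, sat (scons x env) p.

Definition ISigma (n : nat) (K : structure) : Prop :=
  PAminus K /\ ISigma_scheme n K.

Definition IDelta0 (K : structure) : Prop := ISigma 0 K.

(** Exponentiation.  [E] is a parameter-free Delta_0 formula in the two
    variables x := Var 0, y := Var 1, read as "y = 2^x".  [ExpGraph K E]
    says that, in K, E satisfies the defining recursion of x |-> 2^x and is
    functional (these are theorems of I Delta_0 for the standard Delta_0
    definition of exponentiation);  [ExpTotal K E] is the axiom exp:
    forall x exists y, y = 2^x. *)
Definition Exp_at {K : structure} (E : formula) (x y : K) : Prop :=
  sat (scons x (scons y (fun _ => zero))) E.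

Definition ExpGraph (K : structure) (E : formula) : Prop :=
  Exp_at E (@zero K) one /\
  (forall x y : K, Exp_at E x y -> Exp_at E (add x one) (add y y)) /\
  (forall x y y' : K, Exp_at E x y -> Exp_at E x y' -> y = y').

Definition ExpTotal (K : structure) (E : formula) : Prop :=
  forall x : K, exists y : K, Exp_at E x y.

Definition ExpFormula (E : formula) : Prop := isDelta0 E /\ fv_lt 2 E.

(** "x \in c": the x-th binary digit of c is 1, i.e. c = q*2^(x+1) + 2^x + r
    with r < 2^x. *)
Definition bitin {K : structure} (E : formula) (x c : K) : Prop :=
  exists p : K, Exp_at E x p /\
    exists q r : K, c = add (add (mul q (add p p)) p) r /\ lt r p.

Definition end_extension (M K : structure) (f : M -> K) : Prop :=
  (forall x y : M, f x = f y -> x = y) /\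
  f zero = zero /\ f one = one /\
  (forall x y : M, f (add x y) = add (f x) (f y)) /\
  (forall x y : M, f (mul x y) = mul (f x) (f y)) /\
  (forall x y : M, lt x y <-> lt (f x) (f y)) /\
  (forall (m : M) (k : K), lt k (f m) -> exists m' : M, f m' = k).

Definition M_ISigma (n : nat) (M K : structure) (f : M -> K) : Prop :=
  forall (p : formula), Sigma n p -> forall (env : nat -> K) (a : M),
    sat (scons zero env) p ->
    (forall x : K, lt x (f a) -> sat (scons x env) p -> sat (scons (add x one) env) p) ->
    forall x : K, lt x (f a) -> sat (scons x env) p.
Arguments end_extension : clear implicits.
Arguments M_ISigma : clear implicits.

(* Main.v *)
Require Import Defs.
From Stdlib Require Import Ring Classical Lia Setoid Morphisms.

Existing Class PAminus.
Section PA.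
Context {K : structure} {HK : PAminus K}.

Lemma Ksrt : semi_ring_theory (@zero K) one add mul eq.
Proof.
destruct HK as (a1&a2&m1&m2&d&a0&m0&m1'&_).
constructor.
- intros x; rewrite a2; apply a0.
- exact a2.
- intros; symmetry; apply a1.
- intros x; rewrite m2; apply m1'.
- intros x; rewrite m2; apply m0.
- exact m2.
- intros; symmetry; apply m1.
- intros x y z; rewrite m2, d, (m2 z), (m2 z); reflexivity.
Qed.
Add Ring Kr : Ksrt.

Lemma ltT (x y z : K) : lt x y -> lt y z -> lt x z.
Proof. destruct HK as (_&_&_&_&_&_&_&_&h&_). apply h. Qed.
Lemma ltI (x : K) : ~ lt x x.
Proof. destruct HK as (_&_&_&_&_&_&_&_&_&h&_). apply h. Qed.
Lemma tri (x y : K) : lt x y \/ x = y \/ lt y x.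
Proof. destruct HK as (_&_&_&_&_&_&_&_&_&_&h&_). apply h. Qed.
Lemma ltA (x y z : K) : lt x y -> lt (add x z) (add y z).
Proof. destruct HK as (_&_&_&_&_&_&_&_&_&_&_&h&_). apply h. Qed.
Lemma ltM (x y z : K) : lt zero z -> lt x y -> lt (mul x z) (mul y z).
Proof. destruct HK as (_&_&_&_&_&_&_&_&_&_&_&_&h&_). apply h. Qed.
Lemma ltS (x y : K) : lt x y -> exists z, add x z = y.
Proof. destruct HK as (_&_&_&_&_&_&_&_&_&_&_&_&_&h&_). apply h. Qed.
Lemma lt01 : lt (@zero K) one.
Proof. destruct HK as (_&_&_&_&_&_&_&_&_&_&_&_&_&_&h&_). apply h. Qed.
Lemma disc (x : K) : lt zero x -> le one x.
Proof. destruct HK as (_&_&_&_&_&_&_&_&_&_&_&_&_&_&_&h&_). apply h. Qed.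
Lemma le0 (x : K) : le zero x.
Proof. destruct HK as (_&_&_&_&_&_&_&_&_&_&_&_&_&_&_&_&h). apply h. Qed.

Lemma lt_asym (x y : K) : lt x y -> lt y x -> False.
Proof. unfold Defs.le in *. intros h1 h2. apply (ltI x). eapply ltT; eauto. Qed.
Lemma lt_neq (x y : K) : lt x y -> x <> y.
Proof. unfold Defs.le in *. intros h e; subst; apply (ltI y h). Qed.
Lemma not_lt0 (x : K) : ~ lt x zero.
Proof. unfold Defs.le in *. intros h. destruct (le0 x) as [h'|e]. eapply lt_asym; eauto. subst; apply (ltI _ h). Qed.
Lemma le_refl (x : K) : le x x.
Proof. unfold Defs.le in *. right; auto. Qed.
Lemma le_trans (x y z : K) : le x y -> le y z -> le x z.
Proof. unfold Defs.le in *. intros [h|h] [h'|h']; subst; try (solve [left; eauto using ltT]); right; auto. Qed.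
Lemma lt_le_trans (x y z : K) : lt x y -> le y z -> lt x z.
Proof. unfold Defs.le in *. intros h [h'|h']; subst; eauto using ltT. Qed.
Lemma le_lt_trans (x y z : K) : le x y -> lt y z -> lt x z.
Proof. unfold Defs.le in *. intros [h|h] h'; subst; eauto using ltT. Qed.
Lemma lt_le (x y : K) : lt x y -> le x y.
Proof. unfold Defs.le in *. left; auto. Qed.
Lemma le_lt_dec (x y : K) : le x y \/ lt y x.
Proof. unfold Defs.le in *. destruct (tri x y) as [h|[h|h]]; [left;left|left;right|right]; auto. Qed.
Lemma not_lt_le (x y : K) : ~ lt y x -> le x y.
Proof. unfold Defs.le in *. intros h; destruct (le_lt_dec x y); tauto. Qed.
Lemma le_not_lt (x y : K) : le x y -> ~ lt y x.
Proof. unfold Defs.le in *. intros h h'. apply (ltI x). eapply le_lt_trans; eauto. Qed.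
Lemma le_antisym (x y : K) : le x y -> le y x -> x = y.
Proof. unfold Defs.le in *. intros [h|h] h'; auto. exfalso; eapply le_not_lt; eauto. Qed.

Lemma ltAl (x y z : K) : lt x y -> lt (add z x) (add z y).
Proof. unfold Defs.le in *. intros h. rewrite (SRadd_comm Ksrt z x), (SRadd_comm Ksrt z y). apply ltA; auto. Qed.
Lemma leA (x y z : K) : le x y -> le (add x z) (add y z).
Proof. unfold Defs.le in *. intros [h|h]; [left; apply ltA; auto|right; subst; auto]. Qed.
Lemma leAl (x y z : K) : le x y -> le (add z x) (add z y).
Proof. unfold Defs.le in *. intros [h|h]; [left; apply ltAl; auto|right; subst; auto]. Qed.
Lemma ltA_cancel (x y z : K) : lt (add x z) (add y z) -> lt x y.
Proof. unfold Defs.le in *. intros h. destruct (tri x y) as [h'|[h'|h']]; auto; exfalso.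
 subst; apply (ltI _ h). apply (lt_asym _ _ h (ltA _ _ z h')). Qed.
Lemma leA_cancel (x y z : K) : le (add x z) (add y z) -> le x y.
Proof. unfold Defs.le in *. intros h. apply not_lt_le. intros h'. apply (le_not_lt _ _ h). apply ltA; auto. Qed.
Lemma add_cancel (x y z : K) : add x z = add y z -> x = y.
Proof. unfold Defs.le in *. intros h. apply le_antisym; apply (leA_cancel _ _ z); rewrite h; apply le_refl. Qed.
Lemma add_cancel_l (x y z : K) : add z x = add z y -> x = y.
Proof. unfold Defs.le in *. intros h. apply (add_cancel _ _ z). rewrite (SRadd_comm Ksrt x), (SRadd_comm Ksrt y); auto. Qed.
Lemma le_add_r (x y : K) : le x (add x y).
Proof. unfold Defs.le in *. destruct (le0 y) as [h|h]. left. rewrite <- (SRadd_0_l Ksrt x) at 1.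
 rewrite (SRadd_comm Ksrt zero). apply ltAl; auto. subst; right; ring. Qed.
Lemma le_add_l (x y : K) : le x (add y x).
Proof. unfold Defs.le in *. rewrite (SRadd_comm Ksrt); apply le_add_r. Qed.
Lemma lt_succ (x : K) : lt x (add x one).
Proof. unfold Defs.le in *. rewrite <- (SRadd_0_l Ksrt x) at 1. rewrite (SRadd_comm Ksrt zero). apply ltAl, lt01. Qed.
Lemma lt_add_pos (x y : K) : lt zero y -> lt x (add x y).
Proof. unfold Defs.le in *. intros h. rewrite <- (SRadd_0_l Ksrt x) at 1. rewrite (SRadd_comm Ksrt zero). apply ltAl; auto. Qed.
Lemma lt_le_succ (x y : K) : lt x y -> le (add x one) y.
Proof. unfold Defs.le in *. intros h. destruct (ltS _ _ h) as [z hz]. subst.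
 assert (lt zero z). { destruct (le0 z) as [h'|h']; auto. subst. exfalso. rewrite (SRadd_comm Ksrt), (SRadd_0_l Ksrt) in h. apply (ltI _ h). }
 apply leAl, disc; auto. Qed.
Lemma lt_succ_le (x y : K) : lt x (add y one) -> le x y.
Proof. unfold Defs.le in *. intros h. apply not_lt_le. intros h'. apply lt_le_succ in h'. apply (le_not_lt _ _ h'); auto. Qed.
Lemma le_lt_succ (x y : K) : le x y -> lt x (add y one).
Proof. unfold Defs.le in *. intros h. eapply le_lt_trans; eauto using lt_succ. Qed.
Lemma lt_succ_cases (x y : K) : lt x (add y one) -> lt x y \/ x = y.
Proof. unfold Defs.le in *. intros h; apply lt_succ_le in h; auto. Qed.
Lemma pos_pred (u : K) : lt zero u -> exists u', u = add u' one.
Proof. unfold Defs.le in *. intros h. apply disc in h. destruct h as [h|h].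
 destruct (ltS _ _ h) as [z hz]. exists z. rewrite <- hz; ring.
 exists zero. rewrite <- h; ring. Qed.
Lemma mul_le_mono (x y z : K) : le x y -> le (mul x z) (mul y z).
Proof. unfold Defs.le in *. intros [h|h]; [|subst; apply le_refl].
 destruct (le0 z) as [hz|hz]. left; apply ltM; auto. subst. right. ring. Qed.
Lemma mul_le_mono_l (x y z : K) : le x y -> le (mul z x) (mul z y).
Proof. unfold Defs.le in *. intros h. rewrite (SRmul_comm Ksrt z x), (SRmul_comm Ksrt z y). apply mul_le_mono; auto. Qed.
Lemma mul_ge (x z : K) : lt zero z -> le x (mul x z).
Proof. intros h. apply disc in h. assert (e: mul x one = x) by ring. rewrite <- e at 1.
 apply mul_le_mono_l; auto. Qed.
Lemma mul_lt_cancel (x y z : K) : lt (mul x z) (mul y z) -> lt x y.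
Proof. unfold Defs.le in *. intros h. destruct (le_lt_dec y x) as [h'|h']; auto.
 exfalso. apply (le_not_lt _ _ (mul_le_mono _ _ z h') h). Qed.
Lemma le_mul_cancel (x y z : K) : le (mul x z) (mul y z) -> lt zero z -> le x y.
Proof. unfold Defs.le in *. intros h hz. apply not_lt_le. intros h'. apply (le_not_lt _ _ h). apply ltM; auto. Qed.
Lemma lt_add_both (x y u v : K) : lt x y -> le u v -> lt (add x u) (add y v).
Proof. unfold Defs.le in *. intros h h'. eapply lt_le_trans. apply ltA; eauto. apply leAl; auto. Qed.
Lemma le_add_both (x y u v : K) : le x y -> le u v -> le (add x u) (add y v).
Proof. unfold Defs.le in *. intros h h'. eapply le_trans. apply leA; eauto. apply leAl; auto. Qed.

End PA.


Definition up (r : nat -> nat) : nat -> nat :=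
  fun v => match v with 0 => 0 | S v => S (r v) end.

Fixpoint rent (r : nat -> nat) (t : term) : term :=
  match t with
  | Var i => Var (r i)
  | Zero => Zero
  | One => One
  | Add s u => Add (rent r s) (rent r u)
  | Mul s u => Mul (rent r s) (rent r u)
  end.

Fixpoint ren (r : nat -> nat) (p : formula) : formula :=
  match p with
  | Eq s t => Eq (rent r s) (rent r t)
  | Lt s t => Lt (rent r s) (rent r t)
  | Not q => Not (ren r q)
  | And q s => And (ren r q) (ren r s)
  | Or q s => Or (ren r q) (ren r s)
  | Imp q s => Imp (ren r q) (ren r s)
  | All q => All (ren (up r) q)
  | Ex q => Ex (ren (up r) q)
  | BAll t q => BAll (rent r t) (ren (up r) q)
  | BEx t q => BEx (rent r t) (ren (up r) q)
  end.

Section Gen.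
Variable K : structure.

Lemma eval_ext (e e' : nat -> K) t : (forall v, e v = e' v) -> eval e t = eval e' t.
Proof. intros h; induction t; simpl; congruence. Qed.

Lemma scons_ext (x : K) (e e' : nat -> K) : (forall v, e v = e' v) -> forall v, scons x e v = scons x e' v.
Proof. intros h [|v]; simpl; auto. Qed.

Lemma sat_ext p : forall (e e' : nat -> K), (forall v, e v = e' v) -> (sat e p <-> sat e' p).
Proof.
induction p; intros e e' h; simpl.
- rewrite (eval_ext e e' s h), (eval_ext e e' t h); tauto.
- rewrite (eval_ext e e' s h), (eval_ext e e' t h); tauto.
- rewrite (IHp e e' h); tauto.
- rewrite (IHp1 e e' h), (IHp2 e e' h); tauto.
- rewrite (IHp1 e e' h), (IHp2 e e' h); tauto.
- rewrite (IHp1 e e' h), (IHp2 e e' h); tauto.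
- split; intros H x; [rewrite <- (IHp (scons x e) (scons x e') (scons_ext x e e' h))|rewrite (IHp (scons x e) (scons x e') (scons_ext x e e' h))]; auto.
- split; intros [x H]; exists x; [rewrite <- (IHp (scons x e) (scons x e') (scons_ext x e e' h))|rewrite (IHp (scons x e) (scons x e') (scons_ext x e e' h))]; auto.
- rewrite (eval_ext e e' t h).
  split; intros H x hx; [rewrite <- (IHp (scons x e) (scons x e') (scons_ext x e e' h))|rewrite (IHp (scons x e) (scons x e') (scons_ext x e e' h))]; auto.
- rewrite (eval_ext e e' t h).
  split; intros [x [hx H]]; exists x; split; auto; [rewrite <- (IHp (scons x e) (scons x e') (scons_ext x e e' h))|rewrite (IHp (scons x e) (scons x e') (scons_ext x e e' h))]; auto.
Qed.

Lemma eval_ren (e : nat -> K) r t : eval e (rent r t) = eval (fun v => e (r v)) t.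
Proof. induction t; simpl; congruence. Qed.

Lemma up_scons (x : K) (e : nat -> K) r : forall v, scons x e (up r v) = scons x (fun v => e (r v)) v.
Proof. intros [|v]; reflexivity. Qed.

Lemma sat_ren p : forall r (e : nat -> K), sat e (ren r p) <-> sat (fun v => e (r v)) p.
Proof.
induction p; intros r e; simpl; rewrite ?eval_ren, ?IHp, ?IHp1, ?IHp2; try tauto.
- split; intros H x; specialize (H x); [rewrite IHp, (sat_ext _ _ _ (up_scons x e r)) in H|rewrite IHp, (sat_ext _ _ _ (up_scons x e r))]; auto.
- split; intros [x H]; exists x; [rewrite IHp, (sat_ext _ _ _ (up_scons x e r)) in H|rewrite IHp, (sat_ext _ _ _ (up_scons x e r))]; auto.
- split; intros H x hx; specialize (H x hx); [rewrite IHp, (sat_ext _ _ _ (up_scons x e r)) in H|rewrite IHp, (sat_ext _ _ _ (up_scons x e r))]; auto.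
- split; intros [x [hx H]]; exists x; split; auto; [rewrite IHp, (sat_ext _ _ _ (up_scons x e r)) in H|rewrite IHp, (sat_ext _ _ _ (up_scons x e r))]; auto.
Qed.

Lemma eval_fv k t (e e' : nat -> K) : term_fv_lt k t -> (forall v, v < k -> e v = e' v) -> eval e t = eval e' t.
Proof. induction t; simpl; intros H h; auto; f_equal; [apply IHt1|apply IHt2|apply IHt1|apply IHt2]; tauto. Qed.

Lemma sat_fv p : forall k (e e' : nat -> K), fv_lt k p -> (forall v, v < k -> e v = e' v) -> (sat e p <-> sat e' p).
Proof.
assert (hs : forall k (e e' : nat -> K) (x : K), (forall v, v < k -> e v = e' v) -> forall v, v < S k -> scons x e v = scons x e' v).
{ intros k e e' x h [|v] hv; simpl; auto. apply h; lia. }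
induction p; intros k e e' H h; simpl in *.
- rewrite (eval_fv k s e e'), (eval_fv k t e e'); tauto.
- rewrite (eval_fv k s e e'), (eval_fv k t e e'); tauto.
- rewrite (IHp k e e'); tauto.
- rewrite (IHp1 k e e'), (IHp2 k e e'); tauto.
- rewrite (IHp1 k e e'), (IHp2 k e e'); tauto.
- rewrite (IHp1 k e e'), (IHp2 k e e'); tauto.
- split; intros H' x; specialize (IHp (S k) (scons x e) (scons x e') H (hs k e e' x h)); firstorder.
- split; intros [x H']; exists x; specialize (IHp (S k) (scons x e) (scons x e') (proj1 (conj H H)) (hs k e e' x h)); firstorder.
- destruct H as [Ht H]. rewrite (eval_fv k t e e'); auto.
  split; intros H' x hx; specialize (IHp (S k) (scons x e) (scons x e') H (hs k e e' x h)); firstorder.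
- destruct H as [Ht H]. rewrite (eval_fv k t e e'); auto.
  split; intros [x [hx H']]; exists x; specialize (IHp (S k) (scons x e) (scons x e') H (hs k e e' x h)); firstorder.
Qed.

End Gen.

Scheme Sigma_ind2 := Induction for Sigma Sort Prop
with Pi_ind2 := Induction for Pi Sort Prop.
Combined Scheme SP_ind from Sigma_ind2, Pi_ind2.

Lemma D0_ren p : forall r, isDelta0 p -> isDelta0 (ren r p).
Proof. induction p; simpl; intros r H; try tauto; try (destruct H; split; auto); auto. Qed.

Lemma SP_ren : (forall k p, Sigma k p -> forall r, Sigma k (ren r p)) /\ (forall k p, Pi k p -> forall r, Pi k (ren r p)).
Proof.
apply SP_ind; intros.
- constructor; apply D0_ren; auto.
- apply Sigma_Pi; auto.
- simpl; apply Sigma_Ex; auto.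
- constructor; apply D0_ren; auto.
- apply Pi_Sigma; auto.
- simpl; apply Pi_All; auto.
Qed.

Lemma SP_S : (forall k p, Sigma k p -> Sigma (S k) p) /\ (forall k p, Pi k p -> Pi (S k) p).
Proof.
apply SP_ind; intros.
- apply Sigma_Pi, Pi_D0; auto.
- apply Sigma_Pi; auto.
- apply Sigma_Ex; auto.
- apply Pi_Sigma, Sigma_D0; auto.
- apply Pi_Sigma; auto.
- apply Pi_All; auto.
Qed.

Lemma Sigma_le k m p : k <= m -> Sigma k p -> Sigma m p.
Proof. induction 1; auto. intros; apply SP_S; auto. Qed.
Lemma Pi_le k m p : k <= m -> Pi k p -> Pi m p.
Proof. induction 1; auto. intros; apply SP_S; auto. Qed.

Lemma Sigma0_D0 p : Sigma 0 p -> isDelta0 p.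
Proof. intros h; inversion h; auto. Qed.
Lemma Pi0_D0 p : Pi 0 p -> isDelta0 p.
Proof. intros h; inversion h; auto. Qed.

Fixpoint negf (p : formula) : formula :=
  match p with
  | Ex q => All (negf q)
  | All q => Ex (negf q)
  | _ => Not p
  end.

Lemma negf_D0 p : isDelta0 p -> negf p = Not p.
Proof. destruct p; simpl; tauto. Qed.

Lemma SP_neg : (forall k p, Sigma k p -> Pi k (negf p)) /\ (forall k p, Pi k p -> Sigma k (negf p)).
Proof.
apply SP_ind; intros.
- rewrite negf_D0; auto. constructor; simpl; auto.
- apply Pi_Sigma; auto.
- simpl; apply Pi_All; auto.
- rewrite negf_D0; auto. constructor; simpl; auto.
- apply Sigma_Pi; auto.
- simpl; apply Sigma_Ex; auto.
Qed.

Lemma sat_negf (K : structure) p : forall (e : nat -> K), sat e (negf p) <-> ~ sat e p.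
Proof.
induction p; intros e; simpl; try tauto.
- split. intros [x H] H'. rewrite IHp in H. auto.
  intros H. apply NNPP; intros H'. apply H. intros x. apply NNPP; intros H2. apply H'. exists x. rewrite IHp; auto.
- split. intros H [x H']. specialize (H x). rewrite IHp in H. auto.
  intros H x. rewrite IHp. intros H'. apply H; eauto.
Qed.

Section Comb.
Variable K : structure.

Lemma sat_shift (x : K) e d : sat (scons x e) (ren S d) <-> sat e d.
Proof. rewrite sat_ren. apply sat_ext. reflexivity. Qed.

Lemma SP_D0comb :
 (forall k p, Sigma k p -> forall d, isDelta0 d ->
    (exists r, Sigma k r /\ forall e : nat -> K, sat e r <-> (sat e d /\ sat e p)) /\
    (exists r, Sigma k r /\ forall e : nat -> K, sat e r <-> (sat e d \/ sat e p))) /\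
 (forall k p, Pi k p -> forall d, isDelta0 d ->
    (exists r, Pi k r /\ forall e : nat -> K, sat e r <-> (sat e d /\ sat e p)) /\
    (exists r, Pi k r /\ forall e : nat -> K, sat e r <-> (sat e d \/ sat e p))).
Proof.
apply SP_ind; intros.
- split; [exists (And d p)|exists (Or d p)]; split; try (constructor; simpl; auto); simpl; tauto.
- destruct (H d H0) as [[r [h1 h2]] [r' [h1' h2']]].
  split; [exists r|exists r']; split; auto; apply Sigma_Pi; auto.
- destruct (H (ren S d) (D0_ren d S H0)) as [[r [h1 h2]] [r' [h1' h2']]].
  split; [exists (Ex r)|exists (Ex r')]; split; try (apply Sigma_Ex; auto); intros e; simpl.
  + split. intros [x hx]. rewrite h2, sat_shift in hx. split; try tauto. exists x; tauto.
    intros [hd [x hx]]. exists x. rewrite h2, sat_shift; tauto.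
  + split. intros [x hx]. rewrite h2', sat_shift in hx. destruct hx; auto. right; exists x; auto.
    intros [hd|[x hx]]. exists zero. rewrite h2', sat_shift; tauto. exists x; rewrite h2', sat_shift; tauto.
- split; [exists (And d p)|exists (Or d p)]; split; try (constructor; simpl; auto); simpl; tauto.
- destruct (H d H0) as [[r [h1 h2]] [r' [h1' h2']]].
  split; [exists r|exists r']; split; auto; apply Pi_Sigma; auto.
- destruct (H (ren S d) (D0_ren d S H0)) as [[r [h1 h2]] [r' [h1' h2']]].
  split; [exists (All r)|exists (All r')]; split; try (apply Pi_All; auto); intros e; simpl.
  + split. intros hx. split. specialize (hx zero). rewrite h2, sat_shift in hx. tauto.
    intros x; specialize (hx x). rewrite h2 in hx; tauto.
    intros [hd hx] x. rewrite h2, sat_shift; auto.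
  + split. intros hx. destruct (classic (sat e d)); auto. right. intros x. specialize (hx x).
    rewrite h2', sat_shift in hx. tauto.
    intros [hd|hx] x; rewrite h2', sat_shift; auto.
Qed.

Definition D0d (Q : (nat -> K) -> Prop) := exists p, isDelta0 p /\ forall e, sat e p <-> Q e.
Definition SD k (Q : (nat -> K) -> Prop) := exists p, Sigma k p /\ forall e, sat e p <-> Q e.
Definition PD k (Q : (nat -> K) -> Prop) := exists p, Pi k p /\ forall e, sat e p <-> Q e.

Lemma D0d_ext Q Q' : D0d Q -> (forall e, Q e <-> Q' e) -> D0d Q'.
Proof. intros [p [h1 h2]] h; exists p; split; auto; intros e; rewrite h2; auto. Qed.
Lemma SD_ext k Q Q' : SD k Q -> (forall e, Q e <-> Q' e) -> SD k Q'.
Proof. intros [p [h1 h2]] h; exists p; split; auto; intros e; rewrite h2; auto. Qed.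
Lemma PD_ext k Q Q' : PD k Q -> (forall e, Q e <-> Q' e) -> PD k Q'.
Proof. intros [p [h1 h2]] h; exists p; split; auto; intros e; rewrite h2; auto. Qed.

Lemma D0d_sat p : isDelta0 p -> D0d (fun e => sat e p).
Proof. intros h; exists p; split; auto; tauto. Qed.
Lemma SD_sat k p : Sigma k p -> SD k (fun e => sat e p).
Proof. intros h; exists p; split; auto; tauto. Qed.
Lemma PD_sat k p : Pi k p -> PD k (fun e => sat e p).
Proof. intros h; exists p; split; auto; tauto. Qed.

Lemma D0d_SD k Q : D0d Q -> SD k Q.
Proof. intros [p [h1 h2]]; exists p; split; auto. apply (Sigma_le 0); [lia|constructor; auto]. Qed.
Lemma D0d_PD k Q : D0d Q -> PD k Q.
Proof. intros [p [h1 h2]]; exists p; split; auto. apply (Pi_le 0); [lia|constructor; auto]. Qed.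
Lemma PD_SD k Q : PD k Q -> SD (S k) Q.
Proof. intros [p [h1 h2]]; exists p; split; auto. apply Sigma_Pi; auto. Qed.
Lemma SD_PD k Q : SD k Q -> PD (S k) Q.
Proof. intros [p [h1 h2]]; exists p; split; auto. apply Pi_Sigma; auto. Qed.
Lemma SD_le k m Q : k <= m -> SD k Q -> SD m Q.
Proof. intros hk [p [h1 h2]]; exists p; split; auto. apply (Sigma_le k); auto. Qed.
Lemma PD_le k m Q : k <= m -> PD k Q -> PD m Q.
Proof. intros hk [p [h1 h2]]; exists p; split; auto. apply (Pi_le k); auto. Qed.

Lemma SD_ex k Q : SD (S k) Q -> SD (S k) (fun e => exists x, Q (scons x e)).
Proof. intros [p [h1 h2]]; exists (Ex p); split. apply Sigma_Ex; auto. intros e; simpl. 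
 split; intros [x hx]; exists x; apply h2; auto. Qed.
Lemma PD_all k Q : PD (S k) Q -> PD (S k) (fun e => forall x, Q (scons x e)).
Proof. intros [p [h1 h2]]; exists (All p); split. apply Pi_All; auto. intros e; simpl. 
 split; intros hx x; apply h2; auto. Qed.

Lemma SD_not k Q : SD k Q -> PD k (fun e => ~ Q e).
Proof. intros [p [h1 h2]]; exists (negf p); split. apply SP_neg; auto. intros e; rewrite sat_negf, h2; tauto. Qed.
Lemma PD_not k Q : PD k Q -> SD k (fun e => ~ Q e).
Proof. intros [p [h1 h2]]; exists (negf p); split. apply SP_neg; auto. intros e; rewrite sat_negf, h2; tauto. Qed.

Lemma D0d_and Q1 Q2 : D0d Q1 -> D0d Q2 -> D0d (fun e => Q1 e /\ Q2 e).
Proof. intros [p [h1 h2]] [q [h3 h4]]; exists (And p q); split; simpl; auto. intros e; rewrite h2, h4; tauto. Qed.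
Lemma D0d_or Q1 Q2 : D0d Q1 -> D0d Q2 -> D0d (fun e => Q1 e \/ Q2 e).
Proof. intros [p [h1 h2]] [q [h3 h4]]; exists (Or p q); split; simpl; auto. intros e; rewrite h2, h4; tauto. Qed.
Lemma D0d_imp Q1 Q2 : D0d Q1 -> D0d Q2 -> D0d (fun e => Q1 e -> Q2 e).
Proof. intros [p [h1 h2]] [q [h3 h4]]; exists (Imp p q); split; simpl; auto. intros e; rewrite h2, h4; tauto. Qed.
Lemma D0d_not Q1 : D0d Q1 -> D0d (fun e => ~ Q1 e).
Proof. intros [p [h1 h2]]; exists (Not p); split; simpl; auto. intros e; rewrite h2; tauto. Qed.
Lemma D0d_eq s t : D0d (fun e => eval e s = eval e t).
Proof. exists (Eq s t); split; simpl; tauto. Qed.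
Lemma D0d_lt s t : D0d (fun e => lt (eval e s) (eval e t)).
Proof. exists (Lt s t); split; simpl; tauto. Qed.
Lemma D0d_ball t Q : D0d Q -> D0d (fun e => forall x, lt x (eval e t) -> Q (scons x e)).
Proof. intros [p [h1 h2]]; exists (BAll t p); split; simpl; auto. intros e.
 split; intros H x hx; apply h2; auto. Qed.
Lemma D0d_bex t Q : D0d Q -> D0d (fun e => exists x, lt x (eval e t) /\ Q (scons x e)).
Proof. intros [p [h1 h2]]; exists (BEx t p); split; simpl; auto. intros e.
 split; intros [x [hx H]]; exists x; split; auto; apply h2; auto. Qed.

Lemma SD_andD k Q1 Q2 : D0d Q1 -> SD k Q2 -> SD k (fun e => Q1 e /\ Q2 e).
Proof. intros [d [h1 h2]] [p [h3 h4]]. destruct (proj1 SP_D0comb k p h3 d h1) as [[r [hr1 hr2]] _].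
 exists r; split; auto. intros e; rewrite hr2, h2, h4; tauto. Qed.
Lemma SD_orD k Q1 Q2 : D0d Q1 -> SD k Q2 -> SD k (fun e => Q1 e \/ Q2 e).
Proof. intros [d [h1 h2]] [p [h3 h4]]. destruct (proj1 SP_D0comb k p h3 d h1) as [_ [r [hr1 hr2]]].
 exists r; split; auto. intros e; rewrite hr2, h2, h4; tauto. Qed.
Lemma PD_andD k Q1 Q2 : D0d Q1 -> PD k Q2 -> PD k (fun e => Q1 e /\ Q2 e).
Proof. intros [d [h1 h2]] [p [h3 h4]]. destruct (proj2 SP_D0comb k p h3 d h1) as [[r [hr1 hr2]] _].
 exists r; split; auto. intros e; rewrite hr2, h2, h4; tauto. Qed.
Lemma PD_orD k Q1 Q2 : D0d Q1 -> PD k Q2 -> PD k (fun e => Q1 e \/ Q2 e).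
Proof. intros [d [h1 h2]] [p [h3 h4]]. destruct (proj2 SP_D0comb k p h3 d h1) as [_ [r [hr1 hr2]]].
 exists r; split; auto. intros e; rewrite hr2, h2, h4; tauto. Qed.
Lemma PD_impD k Q1 Q2 : D0d Q1 -> PD k Q2 -> PD k (fun e => Q1 e -> Q2 e).
Proof. intros h1 h2. apply (PD_ext k (fun e => ~ Q1 e \/ Q2 e)). apply PD_orD; auto. apply D0d_not; auto.
 intros e. split. intros [h|h] h'; tauto. intros h. destruct (classic (Q1 e)); auto. Qed.
Lemma SD_impD k Q1 Q2 : D0d Q1 -> SD k Q2 -> SD k (fun e => Q1 e -> Q2 e).
Proof. intros h1 h2. apply (SD_ext k (fun e => ~ Q1 e \/ Q2 e)). apply SD_orD; auto. apply D0d_not; auto.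
 intros e. split. intros [h|h] h'; tauto. intros h. destruct (classic (Q1 e)); auto. Qed.

Lemma D0d_ren r Q : D0d Q -> D0d (fun e => Q (fun v => e (r v))).
Proof. intros [p [h1 h2]]; exists (ren r p); split. apply D0_ren; auto. intros e; rewrite sat_ren; auto. Qed.
Lemma SD_ren k r Q : SD k Q -> SD k (fun e => Q (fun v => e (r v))).
Proof. intros [p [h1 h2]]; exists (ren r p); split. apply SP_ren; auto. intros e; rewrite sat_ren; auto. Qed.
Lemma PD_ren k r Q : PD k Q -> PD k (fun e => Q (fun v => e (r v))).
Proof. intros [p [h1 h2]]; exists (ren r p); split. apply SP_ren; auto. intros e; rewrite sat_ren; auto. Qed.

End Comb.

Fixpoint Exn (d : nat) (p : formula) : formula :=
  match d with 0 => p | S d => Ex (Exn d p) end.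
Definition SigD k d p := exists q, Pi k q /\ p = Exn d q.

Lemma Sigma_SigD k p : Sigma (S k) p -> exists d, SigD k d p.
Proof.
induction p; intros h; inversion h; subst; try (exists 0, p0; split; auto; fail);
 try (exists 0; eexists; split; eauto; fail).
destruct (IHp H1) as [d [q [h1 h2]]]. exists (S d), q; split; auto. simpl; congruence.
Qed.

Lemma SigD_Sigma k d p : SigD k d p -> Sigma (S k) p.
Proof. intros [q [h1 h2]]; subst. induction d; simpl. apply Sigma_Pi; auto. apply Sigma_Ex; auto. Qed.

Lemma SigD_ren k d : forall p r, SigD k d p -> SigD k d (ren r p).
Proof. induction d; intros p r [q [h1 h2]]; subst; simpl.
 exists (ren r q); split; auto; apply SP_ren; auto.
 destruct (IHd (Exn d q) (up r)) as [q' [h3 h4]]. exists q; auto. exists q'; split; auto; simpl; congruence. Qed.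

Section Abs.
Variables M K : structure.
Variable f : M -> K.
Hypothesis Hf : end_extension M K f.

Lemma f_eval (e : nat -> M) t : f (eval e t) = eval (fun v => f (e v)) t.
Proof. destruct Hf as (_&h0&h1&ha&hm&_). induction t; simpl; try congruence. Qed.

Lemma abs_D0 p : isDelta0 p -> forall (e : nat -> M), sat e p <-> sat (fun v => f (e v)) p.
Proof.
destruct Hf as (hi&h0&h1&ha&hm&hl&hs).
induction p; simpl; intros hp e; try tauto.
- rewrite <- !f_eval. split; intros H; [rewrite H; auto|apply hi; auto].
- rewrite <- !f_eval. apply hl.
- rewrite IHp; tauto.
- rewrite IHp1, IHp2; tauto.
- rewrite IHp1, IHp2; tauto.
- rewrite IHp1, IHp2; tauto.
- rewrite <- f_eval. split.
  + intros H y hy. destruct (hs _ _ hy) as [m hm']. subst y. apply hl in hy.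
    specialize (H m hy). rewrite IHp in H; auto. revert H; apply sat_ext. intros [|v]; reflexivity.
  + intros H x hx. rewrite IHp; auto. apply hl in hx. specialize (H _ hx). revert H; apply sat_ext. intros [|v]; reflexivity.
- rewrite <- f_eval. split.
  + intros [x [hx H]]. exists (f x). split. apply hl; auto. rewrite IHp in H; auto. revert H; apply sat_ext. intros [|v]; reflexivity.
  + intros [y [hy H]]. destruct (hs _ _ hy) as [m hm']. subst y. exists m. split. apply hl; auto.
    rewrite IHp; auto. revert H; apply sat_ext. intros [|v]; reflexivity.
Qed.
End Abs.

Section BQsec.
Variable K : structure.
Variable n : nat.
Hypothesis HKn : ISigma n K.
Let HK : PAminus K := proj1 HKn.
Existing Instance HK.
Add Ring Kr : (@Ksrt K HK).

Lemma Kind k (Q : (nat -> K) -> Prop) : k <= n -> SD K k Q -> forall e, Q (scons zero e) ->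
  (forall x, Q (scons x e) -> Q (scons (add x one) e)) -> forall x, Q (scons x e).
Proof.
intros hk [p [h1 h2]] e H0 HS x. apply h2.
apply (proj2 HKn p (Sigma_le k n p hk h1) e). apply h2; auto. intros y hy. apply h2; apply HS; apply h2; auto.
Qed.

Definition BQS k := forall p t, Sigma k p ->
  (exists r, Sigma k r /\ forall e : nat -> K, sat e r <-> exists x, lt x (eval e t) /\ sat (scons x e) p) /\
  (exists r, Sigma k r /\ forall e : nat -> K, sat e r <-> forall x, lt x (eval e t) -> sat (scons x e) p).
Definition BQP k := forall p t, Pi k p ->
  (exists r, Pi k r /\ forall e : nat -> K, sat e r <-> exists x, lt x (eval e t) /\ sat (scons x e) p) /\
  (exists r, Pi k r /\ forall e : nat -> K, sat e r <-> forall x, lt x (eval e t) -> sat (scons x e) p).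

Lemma BQS_BQP k : BQS k -> BQP k.
Proof.
intros H p t hp. assert (hq : Sigma k (negf p)) by (apply SP_neg; auto).
destruct (H (negf p) t hq) as [[r1 [h1 h2]] [r2 [h3 h4]]]. split.
- exists (negf r2). split. apply SP_neg; auto. intros e. rewrite sat_negf, h4. split.
  intros h. apply NNPP; intros h'. apply h. intros x hx. rewrite sat_negf. intros h''. apply h'; eauto.
  intros [x [hx h]] h'. specialize (h' x hx). rewrite sat_negf in h'. auto.
- exists (negf r1). split. apply SP_neg; auto. intros e. rewrite sat_negf, h2. split.
  intros h x hx. apply NNPP; intros h'. apply h. exists x; split; auto. rewrite sat_negf; auto.
  intros h [x [hx h']]. rewrite sat_negf in h'. auto.
Qed.

Lemma BQS0 : BQS 0.
Proof.
intros p t hp. apply Sigma0_D0 in hp. split.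
- exists (BEx t p); split. constructor; simpl; auto. simpl; tauto.
- exists (BAll t p); split. constructor; simpl; auto. simpl; tauto.
Qed.

Definition sw (v : nat) : nat := match v with 0 => 1 | 1 => 0 | v => v end.

Lemma LemA k : BQP k -> forall d p t, SigD k d p -> exists r, SigD k d r /\
  forall e : nat -> K, sat e r <-> exists x, lt x (eval e t) /\ sat (scons x e) p.
Proof.
intros hP. induction d; intros p t [q [hq ->]]; simpl.
- destruct (hP q t hq) as [[r [h1 h2]] _]. exists r; split; auto. exists r; split; auto.
- destruct (IHd (ren sw (Exn d q)) (rent S t)) as [r [h1 h2]].
  apply SigD_ren. exists q; auto.
  destruct h1 as [q' [hq' ->]].
  exists (Ex (Exn d q')). split. exists q'; split; auto.
  intros e. simpl. split.
  + intros [y hy]. rewrite h2 in hy. destruct hy as [x [hx hy]].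
    rewrite eval_ren in hx. exists x. split. erewrite eval_ext; [exact hx|reflexivity].
    exists y. rewrite sat_ren in hy. revert hy. apply sat_ext. intros [|[|v]]; reflexivity.
  + intros [x [hx [y hy]]]. exists y. rewrite h2. exists x. split.
    rewrite eval_ren. erewrite eval_ext; [exact hx|reflexivity].
    rewrite sat_ren. revert hy. apply sat_ext. intros [|[|v]]; reflexivity.
Qed.

Definition sk1 (v : nat) : nat := match v with 0 => 0 | 1 => 1 | S (S w) => S (S (S w)) end.
Definition sk2 (v : nat) : nat := match v with 0 => 0 | 1 => 1 | S (S w) => S (S (S (S w))) end.

Lemma lt_plus_r (b y : K) : lt y (add b (add y one)).
Proof. eapply lt_le_trans. apply lt_succ. apply le_add_l; auto. Qed.
Lemma lt_plus_l (b y c : K) : lt c b -> lt c (add b (add y one)).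
Proof. intros h. eapply lt_le_trans. apply h. apply le_add_r; auto. Qed.

Lemma LemB k : BQP k -> S k <= n -> forall d p t, SigD k d p -> exists r, SigD k d r /\
  forall e : nat -> K, sat e r <-> forall x, lt x (eval e t) -> sat (scons x e) p.
Proof.
intros hP hk. induction d; intros p t [q [hq ->]]; simpl.
- destruct (hP q t hq) as [_ [r [h1 h2]]]. exists r; split; auto. exists r; split; auto.
- set (p0 := Exn d q).
  assert (hp0 : SigD k d p0) by (exists q; auto).
  destruct (LemA k hP d (ren sk1 p0) (Var 1)) as [r1 [hr1 er1]]. apply SigD_ren; auto.
  destruct (IHd r1 (rent S t) hr1) as [r2 [hr2 er2]].
  destruct (LemA k hP d (ren sk2 p0) (Var 1)) as [r1' [hr1' er1']]. apply SigD_ren; auto.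
  destruct (IHd r1' (Var 1) hr1') as [r2' [hr2' er2']].
  exists (Ex r2). split.
  { destruct hr2 as [q2 [hq2 ->]]. exists q2; split; auto. }
  intros e. simpl.
  assert (E1 : sat e (Ex r2) <-> exists b, forall x, lt x (eval e t) -> exists y, lt y b /\ sat (scons y (scons x e)) p0).
  { simpl. split.
    - intros [b hb]. exists b. rewrite er2 in hb. intros x hx. 
      assert (hx' : lt x (eval (scons b e) (rent S t))) by (rewrite eval_ren; erewrite eval_ext; [exact hx|reflexivity]).
      specialize (hb x hx'). rewrite er1 in hb. destruct hb as [y [hy hy']]. exists y; split; auto.
      rewrite sat_ren in hy'. revert hy'. apply sat_ext. intros [|[|v]]; reflexivity.
    - intros [b hb]. exists b. rewrite er2. intros x hx.
      rewrite eval_ren in hx. assert (hx' : lt x (eval e t)) by (erewrite eval_ext; [exact hx|reflexivity]).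
      destruct (hb x hx') as [y [hy hy']]. rewrite er1. exists y; split; auto.
      rewrite sat_ren. revert hy'. apply sat_ext. intros [|[|v]]; reflexivity. }
  rewrite E1. split.
  + intros [b hb] x hx. destruct (hb x hx) as [y [_ hy]]. exists y; auto.
  + intros H.
    (* collection by induction *)
    assert (HS : SD K (S k) (fun e' => le (e' 0) (eval (fun v => e' (S v)) t) ->
       exists b, forall x, lt x (e' 0) -> exists y, lt y b /\ sat (scons y (scons x (fun v => e' (S v)))) p0)).
    { apply (SD_ext K (S k) (fun e' => (lt (eval e' (Var 0)) (eval e' (rent S t)) \/ eval e' (Var 0) = eval e' (rent S t)) -> sat e' (Ex r2'))).
      apply SD_impD. apply D0d_or. apply D0d_lt. apply D0d_eq.
      apply SD_sat. apply SigD_Sigma with (d := S d). destruct hr2' as [q2 [hq2 ->]]. exists q2; split; auto.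
      intros e'. simpl. rewrite eval_ren.
      assert (ee : eval (fun v => e' (S v)) t = eval (fun v => e' (S v)) t) by reflexivity.
      unfold Defs.le. apply imp_iff_compat_l. split.
      - intros [b hb]. exists b. rewrite er2' in hb. intros x hx. specialize (hb x hx).
        rewrite er1' in hb. destruct hb as [y [hy hy']]. exists y; split; auto.
        rewrite sat_ren in hy'. revert hy'. apply sat_ext. intros [|[|v]]; reflexivity.
      - intros [b hb]. exists b. rewrite er2'. intros x hx. rewrite er1'.
        destruct (hb x hx) as [y [hy hy']]. exists y; split; auto.
        rewrite sat_ren. revert hy'. apply sat_ext. intros [|[|v]]; reflexivity. }
    assert (ind := Kind (S k) _ hk HS e). simpl in ind.
    assert (Hall : forall z, le z (eval e t) -> exists b, forall x, lt x z -> exists y, lt y b /\ sat (scons y (scons x e)) p0).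
    { intros z. apply ind.
      - intros _. exists zero. intros x hx. exfalso. apply (not_lt0 x hx).
      - intros z' IH hz'. destruct IH as [b hb].
        + apply (le_trans _ (add z' one)); auto. left; apply lt_succ; auto.
        + assert (hz : lt z' (eval e t)) by (eapply lt_le_trans; eauto; apply lt_succ; auto).
          destruct (H z' hz) as [y0 hy0]. exists (add b (add y0 one)). intros x hx.
          destruct (lt_succ_cases _ _ hx) as [hx'|hx'].
          * destruct (hb x hx') as [y [hy hy']]. exists y; split; auto. apply lt_plus_l; auto.
          * subst x. exists y0; split; auto. apply lt_plus_r. }
    apply Hall. apply le_refl.
Qed.

Lemma BQall : forall k, k <= n -> BQS k /\ BQP k.
Proof.
induction k; intros hk.
- split. apply BQS0. apply BQS_BQP, BQS0.
- destruct (IHk ltac:(lia)) as [_ hP].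
  assert (hS : BQS (S k)).
  { intros p t hp. destruct (Sigma_SigD k p hp) as [d hd]. split.
    - destruct (LemA k hP d p t hd) as [r [h1 h2]]. exists r; split; auto. eapply SigD_Sigma; eauto.
    - destruct (LemB k hP hk d p t hd) as [r [h1 h2]]. exists r; split; auto. eapply SigD_Sigma; eauto. }
  split; auto. apply BQS_BQP; auto.
Qed.

Lemma SD_bex k t Q : k <= n -> SD K k Q -> SD K k (fun e => exists x, lt x (eval e t) /\ Q (scons x e)).
Proof. intros hk [p [h1 h2]]. destruct (proj1 (BQall k hk) p t h1) as [[r [h3 h4]] _].
 exists r; split; auto. intros e; rewrite h4. split; intros [x [hx H]]; exists x; split; auto; apply h2; auto. Qed.
Lemma SD_ball k t Q : k <= n -> SD K k Q -> SD K k (fun e => forall x, lt x (eval e t) -> Q (scons x e)).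
Proof. intros hk [p [h1 h2]]. destruct (proj1 (BQall k hk) p t h1) as [_ [r [h3 h4]]].
 exists r; split; auto. intros e; rewrite h4. split; intros H x hx; apply h2; auto. Qed.
Lemma PD_bex k t Q : k <= n -> PD K k Q -> PD K k (fun e => exists x, lt x (eval e t) /\ Q (scons x e)).
Proof. intros hk [p [h1 h2]]. destruct (proj2 (BQall k hk) p t h1) as [[r [h3 h4]] _].
 exists r; split; auto. intros e; rewrite h4. split; intros [x [hx H]]; exists x; split; auto; apply h2; auto. Qed.
Lemma PD_ball k t Q : k <= n -> PD K k Q -> PD K k (fun e => forall x, lt x (eval e t) -> Q (scons x e)).
Proof. intros hk [p [h1 h2]]. destruct (proj2 (BQall k hk) p t h1) as [_ [r [h3 h4]]].
 exists r; split; auto. intros e; rewrite h4. split; intros H x hx; apply h2; auto. Qed.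

End BQsec.

Definition Eren (i j : nat) (v : nat) : nat := match v with 0 => i | 1 => j | _ => 0 end.
Definition Eat (E : formula) (i j : nat) : formula := ren (Eren i j) E.

Definition BITf (E : formula) (i j : nat) : formula :=
  BEx (Add (Var j) One) (And (Eat E (S i) 0)
   (BEx (Add (Var (S j)) One) (BEx (Var 1)
     (Eq (Var (3 + j)) (Add (Add (Mul (Var 1) (Add (Var 2) (Var 2))) (Var 2)) (Var 0)))))).

Lemma Eat_D0 E i j : ExpFormula E -> isDelta0 (Eat E i j).
Proof. intros [h _]. apply D0_ren; auto. Qed.
Lemma BITf_D0 E i j : ExpFormula E -> isDelta0 (BITf E i j).
Proof. intros h. simpl. repeat split; auto. apply Eat_D0; auto. Qed.

Lemma sat_Eat (K : structure) E (hE : ExpFormula E) i j (e : nat -> K) :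
  sat e (Eat E i j) <-> Exp_at E (e i) (e j).
Proof. unfold Eat, Exp_at. rewrite sat_ren. apply (sat_fv K E 2); [apply hE|].
 intros [|[|v]] hv; simpl; auto; lia. Qed.

Section Bits.
Context {K : structure} {HK : PAminus K}.
Add Ring Kr2 : (@Ksrt K HK).
Variable E : formula.
Hypothesis hE : ExpFormula E.

Lemma le_ex (x y : K) : le x y -> exists z, add x z = y.
Proof. intros [h|h]. apply ltS; auto. exists zero; subst; ring. Qed.

Lemma sat_BIT i j (e : nat -> K) : sat e (BITf E i j) <-> bitin E (e i) (e j).
Proof.
unfold BITf, bitin. simpl. split.
- intros [p [hp [h1 [q [hq [r [hr h2]]]]]]]. rewrite sat_Eat in h1 by auto. simpl in h1.
  exists p; split; auto. exists q, r; split; auto.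
- intros [p [h1 [q [r [h2 hr]]]]].
  assert (hp : lt zero p) by (eapply le_lt_trans; [apply le0|exact hr]).
  assert (hpc : le p (e j)). { rewrite h2. eapply le_trans; [|apply le_add_r]. apply le_add_l. }
  assert (hqc : le q (e j)). { rewrite h2. eapply le_trans; [|apply le_add_r]. eapply le_trans; [|apply le_add_r].
     apply mul_ge. eapply lt_le_trans; [exact hp|apply le_add_r]. }
  exists p; split. apply le_lt_succ; auto. split. rewrite sat_Eat by auto. auto.
  exists q; split. apply le_lt_succ; auto. exists r; split; auto.
Qed.

Lemma D0d_bit i j : D0d K (fun e => bitin E (e i) (e j)).
Proof. apply (D0d_ext K (fun e => sat e (BITf E i j))). apply D0d_sat, BITf_D0; auto.
 intros e; apply sat_BIT. Qed.

Lemma div_uniq (q r q' r' d : K) : add (mul q d) r = add (mul q' d) r' -> lt r d -> lt r' d -> q = q' /\ r = r'.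
Proof.
intros h hr hr'.
assert (gen : forall q r q' r', add (mul q d) r = add (mul q' d) r' -> lt r d -> lt q q' -> False).
{ intros a b a' b' hh hb ha. apply lt_le_succ in ha.
  assert (lt (add (mul a d) b) (add (mul a' d) b')). 
  { eapply lt_le_trans. apply ltAl; exact hb. eapply le_trans; [|apply le_add_r].
    assert (add (mul a d) d = mul (add a one) d) by ring. rewrite H. apply mul_le_mono; auto. }
  rewrite hh in H. apply (ltI _ H). }
destruct (tri q q') as [hq|[hq|hq]].
- exfalso; eapply gen; eauto.
- subst; split; auto. eapply add_cancel_l; eauto.
- exfalso; eapply gen; [symmetry; exact h|exact hr'|exact hq].
Qed.

Lemma helperL (s k r p : K) : lt s k -> lt r p -> lt (add (mul s (add p p)) (add r p)) (mul k (add p p)).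
Proof.
intros hs hr. apply lt_le_succ in hs.
eapply lt_le_trans with (mul (add s one) (add p p)).
- assert (mul (add s one) (add p p) = add (mul s (add p p)) (add p p)) by ring. rewrite H.
  apply ltAl. apply ltA; auto.
- apply mul_le_mono; auto.
Qed.

Lemma lt_quot (q r k d : K) : lt (add (mul q d) r) (mul k d) -> lt q k.
Proof. intros h. destruct (le_lt_dec k q) as [hk|hk]; auto. exfalso.
 apply (le_not_lt _ _ (mul_le_mono _ _ d hk)). eapply le_lt_trans; [apply le_add_r|exact h]. Qed.

End Bits.

Section ExpK.
Variable K : structure.
Variable n : nat.
Hypothesis HKn : ISigma n K.
Let HK : PAminus K := proj1 HKn.
Existing Instance HK.
Add Ring Kr3 : (@Ksrt K HK).
Variable E : formula.
Hypothesis hE : ExpFormula E.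
Hypothesis hG : ExpGraph K E.
Hypothesis hT : ExpTotal K E.

Lemma exp0 : Exp_at E (@zero K) one.
Proof. apply hG. Qed.
Lemma expS (x p : K) : Exp_at E x p -> Exp_at E (add x one) (add p p).
Proof. apply hG. Qed.
Lemma expF (x p p' : K) : Exp_at E x p -> Exp_at E x p' -> p = p'.
Proof. apply hG. Qed.

Definition PsiF : formula :=
  BAll (Add (Var 1) One) (Imp (Eat E 1 0) (And (Lt Zero (Var 0))
    (BAll (Var 1) (BEx (Add (Var 1) One) (BEx (Add (Var 2) One)
       (And (Eat E 2 0) (Eq (Var 3) (Mul (Var 1) (Add (Var 0) (Var 0)))))))))).

Lemma Psi_ind (P : K) : forall y : K, forall p, le p P -> Exp_at E y p ->
  lt zero p /\ forall x, lt x y -> exists k q, Exp_at E x q /\ p = mul k (add q q).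
Proof.
assert (H : forall y, sat (scons y (scons P (fun _ => zero))) PsiF).
{ refine (Kind K n HKn 0 (fun e => sat e PsiF) _ _ _ _ _). lia. apply D0d_SD, D0d_sat. simpl. repeat split; apply Eat_D0; auto.
  - simpl. intros p hp. rewrite sat_Eat by auto. simpl. intros h.
    rewrite (expF _ _ _ h exp0). split. apply lt01. intros x hx. exfalso; apply (not_lt0 _ hx).
  - intros y IH. simpl in *. intros p hp. rewrite sat_Eat by auto. simpl. intros h.
    destruct (hT y) as [p' hp'].
    assert (ep : p = add p' p') by (eapply expF; [exact h|apply expS; auto]).
    assert (hp'P : le p' P). { apply lt_succ_le in hp. eapply le_trans; [|exact hp]. rewrite ep; apply le_add_r. }
    specialize (IH p' (le_lt_succ _ _ hp'P)). rewrite sat_Eat in IH by auto. simpl in IH.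
    destruct (IH hp') as [hpos hall].
    split. rewrite ep. eapply lt_le_trans; [exact hpos|apply le_add_r].
    intros x hx. destruct (lt_succ_cases _ _ hx) as [hx'|hx'].
    + destruct (hall x hx') as [k [hk [q [hq [h1 h2]]]]].
      rewrite sat_Eat in h1 by auto. simpl in h1.
      exists (add k k). split. rewrite ep. apply le_lt_succ. apply le_add_both; apply lt_succ_le; auto.
      exists q. split. apply le_lt_succ. eapply le_trans; [apply lt_succ_le; exact hq|]. rewrite ep; apply le_add_r.
      split. rewrite sat_Eat by auto. auto. rewrite ep, h2. ring.
    + subst x. exists one. split. apply le_lt_succ. apply disc. rewrite ep. eapply lt_le_trans; [exact hpos|apply le_add_r].
      exists p'. split. apply le_lt_succ. rewrite ep; apply le_add_r.
      split. rewrite sat_Eat by auto. auto. rewrite ep. ring. }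
intros y p hp hy. specialize (H y). simpl in H. specialize (H p (le_lt_succ _ _ hp)).
rewrite sat_Eat in H by auto. simpl in H. destruct (H hy) as [h1 h2]. split; auto.
intros x hx. destruct (h2 x hx) as [k [_ [q [_ [h3 h4]]]]]. rewrite sat_Eat in h3 by auto. exists k, q; auto.
Qed.

Lemma exp_pos (x p : K) : Exp_at E x p -> lt zero p.
Proof. intros h. apply (Psi_ind p x p (le_refl _) h). Qed.

Lemma exp_div (x y q p : K) : lt x y -> Exp_at E x q -> Exp_at E y p -> exists k, p = mul k (add q q).
Proof. intros hxy hq hp. destruct (Psi_ind p y p (le_refl _) hp) as [_ h].
 destruct (h x hxy) as [k [q' [h1 h2]]]. rewrite (expF _ _ _ hq h1). eauto. Qed.

Lemma divK (d : K) : lt zero d -> forall c, exists q r, c = add (mul q d) r /\ lt r d.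
Proof.
intros hd.
assert (H : forall c, sat (scons c (scons d (fun _ => zero)))
   (BEx (Add (Var 0) One) (BEx (Var 2) (Eq (Var 2) (Add (Mul (Var 1) (Var 3)) (Var 0)))))).
{ refine (Kind K n HKn 0 (fun e => sat e (BEx (Add (Var 0) One) (BEx (Var 2) (Eq (Var 2) (Add (Mul (Var 1) (Var 3)) (Var 0)))))) _ _ _ _ _). lia. apply D0d_SD, D0d_sat. simpl; auto.
  - simpl. exists zero; split. apply lt_succ. exists zero; split; auto. ring.
  - intros c IH. simpl in *. destruct IH as [q [hq [r [hr e]]]].
    assert (hqc : le q c). { rewrite e. eapply le_trans; [apply mul_ge; exact hd|apply le_add_r]. }
    destruct (lt_le_succ _ _ hr) as [h|h].
    + exists q; split. apply le_lt_succ. eapply le_trans; [exact hqc|]. left; apply lt_succ.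
      exists (add r one); split; auto. rewrite e; ring.
    + exists (add q one); split. apply le_lt_succ. apply leA; auto.
      exists zero; split; auto. rewrite e, <- h. ring. }
intros c. destruct (H c) as [q [_ [r [hr e]]]]. exists q, r; split; auto.
Qed.

Lemma notbit_dec (x p c : K) : Exp_at E x p -> ~ bitin E x c -> exists q r, c = add (mul q (add p p)) r /\ lt r p.
Proof.
intros hp hb. assert (hp0 := exp_pos _ _ hp).
assert (hpp : lt zero (add p p)) by (eapply lt_le_trans; [exact hp0|apply le_add_r]).
destruct (divK _ hpp c) as [q [r0 [e hr0]]].
destruct (le_lt_dec p r0) as [h|h].
- exfalso. apply hb. destruct (le_ex _ _ h) as [r er]. exists p; split; auto. exists q, r. split.
  rewrite e, <- er; ring. apply (ltA_cancel _ _ p). rewrite (SRadd_comm (@Ksrt K HK) r p), er. auto.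
- exists q, r0; auto.
Qed.

Lemma notbit0 (x : K) : ~ bitin E x zero.
Proof. intros [p [hp [q [r [e hr]]]]]. assert (hp0 := exp_pos _ _ hp).
 apply (le_not_lt p zero). rewrite e. eapply le_trans; [|apply le_add_r]. apply le_add_l. auto. Qed.

Lemma G1 (A P c x p : K) : Exp_at E A P -> lt c P -> lt x A -> Exp_at E x p -> ~ bitin E x c -> lt (add c p) P.
Proof.
intros hP hc hx hp hb. destruct (exp_div _ _ _ _ hx hp hP) as [k ek].
destruct (notbit_dec _ _ _ hp hb) as [q [r [e hr]]].
assert (hq : lt q k). { apply (lt_quot q r k (add p p)). rewrite <- e, <- ek; auto. }
rewrite ek, e. assert (add (add (mul q (add p p)) r) p = add (mul q (add p p)) (add r p)) by ring. rewrite H.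
apply helperL; auto.
Qed.

Lemma G2 (x p c y : K) : Exp_at E x p -> ~ bitin E x c -> y <> x -> bitin E y (add c p) -> bitin E y c.
Proof.
intros hp hb hyx [py [hpy [Q [R [e hR]]]]].
assert (hpy0 := exp_pos _ _ hpy). assert (hp0 := exp_pos _ _ hp).
destruct (tri y x) as [hlt|[heq|hgt]]; [|contradiction|].
- destruct (exp_div _ _ _ _ hlt hpy hp) as [k ek].
  assert (hkQ : le k Q).
  { apply not_lt_le. intros hQk. apply (ltI (add c p)). eapply lt_le_trans.
    rewrite e at 1. assert (add (add (mul Q (add py py)) py) R = add (mul Q (add py py)) (add R py)) by ring.
    rewrite H. apply helperL; [exact hQk|exact hR]. rewrite ek. apply le_add_l. }
  destruct (le_ex _ _ hkQ) as [Q' eQ]. exists py; split; auto. exists Q', R; split; auto.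
  apply (add_cancel _ _ p). rewrite e, ek, <- eQ. ring.
- destruct (exp_div _ _ _ _ hgt hp hpy) as [k ek].
  assert (hpyy : lt zero (add py py)) by (eapply lt_le_trans; [exact hpy0|apply le_add_r]).
  destruct (divK _ hpyy c) as [Q' [S [eS hS]]].
  destruct (notbit_dec _ _ _ hp hb) as [q [r [ec hr]]].
  assert (hpp : lt zero (add p p)) by (eapply lt_le_trans; [exact hp0|apply le_add_r]).
  destruct (divK _ hpp S) as [s [r' [eS' hr']]].
  assert (er : r' = r).
  { assert (hrp : lt r (add p p)) by (eapply lt_le_trans; [exact hr|apply le_add_r]).
    refine (proj2 (div_uniq (add (mul Q' (add k k)) s) r' q r (add p p) _ hr' hrp)).
    rewrite <- ec, eS, eS', ek. ring. }
  subst r'.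
  assert (hs : lt s (add k k)). { apply (lt_quot s r (add k k) (add p p)). rewrite <- eS'.
     assert (mul (add k k) (add p p) = add py py) by (rewrite ek; ring). rewrite H; auto. }
  assert (hSp : lt (add S p) (add py py)).
  { assert (add py py = mul (add k k) (add p p)) by (rewrite ek; ring). rewrite H, eS'.
    assert (add (add (mul s (add p p)) r) p = add (mul s (add p p)) (add r p)) by ring. rewrite H0.
    apply helperL; auto. }
  assert (hPR : lt (add py R) (add py py)) by (rewrite (SRadd_comm (@Ksrt K HK) py R); apply ltA; auto).
  destruct (div_uniq Q' (add S p) Q (add py R) (add py py)) as [eQ eSp]; auto.
  { assert (add (mul Q (add py py)) (add py R) = add c p) by (rewrite e; ring). rewrite H, eS. ring. }
  assert (hSge : le py S).
  { apply not_lt_le. intros hSl. assert (hsk : lt s k).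
    { apply (lt_quot s r k (add p p)). rewrite <- eS', <- ek. auto. }
    apply (ltI (add S p)). eapply lt_le_trans. rewrite eS'.
    assert (add (add (mul s (add p p)) r) p = add (mul s (add p p)) (add r p)) by ring. rewrite H.
    apply helperL; [exact hsk|exact hr]. rewrite <- ek, eSp. apply le_add_r. }
  destruct (le_ex _ _ hSge) as [R'' eR].
  exists py; split; auto. exists Q', R''. split. rewrite eS, <- eR. ring.
  apply (ltA_cancel _ _ py). rewrite (SRadd_comm (@Ksrt K HK) R'' py), eR. auto.
Qed.

End ExpK.

Section Main.
Variable n : nat.
Variables M K : structure.
Variable f : M -> K.
Variable E : formula.
Hypothesis hE : ExpFormula E.
Hypothesis hGM : ExpGraph M E.
Hypothesis hTM : ExpTotal M E.
Hypothesis HKn : ISigma n K.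
Hypothesis hG : ExpGraph K E.
Hypothesis hT : ExpTotal K E.
Hypothesis Hf : end_extension M K f.
Let HK : PAminus K := proj1 HKn.
Existing Instance HK.
Add Ring Kr4 : (@Ksrt K HK).

Lemma f_succ (a : M) : f (add a one) = add (f a) one.
Proof. destruct Hf as (_&_&h1&ha&_). rewrite ha, h1; auto. Qed.

Lemma f_exp (a : M) : exists m, Exp_at E (f a) (f m).
Proof.
destruct (hTM a) as [m hm]. exists m. unfold Exp_at in *.
apply (abs_D0 M K f Hf E (proj1 hE)) in hm. revert hm. apply sat_ext.
destruct Hf as (_&h0&_). intros [|[|v]]; simpl; auto.
Qed.

Let expos := exp_pos K n HKn E hE hG hT.
Let G1' := G1 K n HKn E hE hG hT.
Let G2' := G2 K n HKn E hE hG hT.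
Let nb0 := notbit0 K n HKn E hE hG hT.
Let ltpl := lt_plus_l K n HKn.
Let ltpr := lt_plus_r K n HKn.

Lemma Mind (HI : M_ISigma (S n) M K f) (Q : (nat -> K) -> Prop) : SD K (S n) Q -> forall e a, Q (scons zero e) ->
  (forall x, lt x (f a) -> Q (scons x e) -> Q (scons (add x one) e)) -> forall x, lt x (f a) -> Q (scons x e).
Proof.
intros [p [h1 h2]] e a H0 HS x hx. apply h2. apply (HI p h1 e a); auto.
apply h2; auto. intros y hy hy'. apply h2. apply HS; auto. apply h2; auto.
Qed.

Definition r2 (k : nat) (v : nat) : nat := match v with 0 => 0 | 1 => 1 | S (S w) => k + w end.

Lemma sat_r2 (k : nat) (e : nat -> K) th : sat (fun v => e (r2 k v)) th <-> sat (scons (e 0) (scons (e 1) (fun v => e (k + v)))) th.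
Proof. apply sat_ext. intros [|[|v]]; reflexivity. Qed.

Lemma contract p : Sigma (S n) p -> exists th, Pi n th /\ forall e : nat -> K, sat e p <-> exists w, sat (scons w e) th.
Proof.
intros hp. destruct (Sigma_SigD n p hp) as [d hd]. clear hp. revert p hd.
induction d; intros p [q [hq ->]]; simpl.
- exists (ren S q). split. apply SP_ren; auto. intros e. split.
  intros h. exists zero. rewrite sat_shift; auto. intros [w h]. rewrite sat_shift in h; auto.
- destruct (IHd (Exn d q)) as [th0 [h1 h2]]. exists q; auto.
  assert (P0 : PD K n (fun e3 => sat (fun v => e3 (r2 3 v)) th0)) by (apply (PD_ren K n (r2 3) (fun e => sat e th0)); apply PD_sat; auto).
  assert (P1 : PD K n (fun e2 => exists w, lt w (eval e2 (Var 1)) /\ sat (fun v => scons w e2 (r2 3 v)) th0)).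
  { apply (PD_bex K n HKn n (Var 1) (fun e3 => sat (fun v => e3 (r2 3 v)) th0)); auto. }
  assert (P2 : PD K n (fun e1 => exists y, lt y (eval e1 (Var 0)) /\ exists w, lt w (eval (scons y e1) (Var 1)) /\ sat (fun v => scons w (scons y e1) (r2 3 v)) th0)).
  { apply (PD_bex K n HKn n (Var 0) (fun e2 => exists w, lt w (eval e2 (Var 1)) /\ sat (fun v => scons w e2 (r2 3 v)) th0)); auto. }
  destruct P2 as [th [h3 h4]]. exists th. split; auto. intros e. simpl.
  split.
  + intros [y hy]. rewrite h2 in hy. destruct hy as [w hw]. exists (add y (add w one)). rewrite h4. simpl.
    exists y. split. apply lt_add_pos. eapply lt_le_trans; [apply lt01|apply le_add_l].
    exists w. split. apply (lt_plus_r K n HKn). rewrite sat_r2. simpl. auto.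
  + intros [W hW]. rewrite h4 in hW. simpl in hW. destruct hW as [y [_ [w [_ hw]]]].
    exists y. rewrite h2. exists w. rewrite sat_r2 in hw. simpl in hw. auto.
Qed.


Lemma sat_r2_7 th (y x b c z P A : K) (env : nat -> K) : sat (fun v => scons y (scons x (scons b (scons c (scons z (scons P (scons A env)))))) (r2 7 v)) th <-> sat (scons y (scons x env)) th.
Proof. apply sat_ext. intros [|[|v]]; reflexivity. Qed.

Lemma core (HI : M_ISigma (S n) M K f) th (hth : Pi n th) (env : nat -> K) (a : M) :
  exists c b, forall x, lt x (f a) ->
    (bitin E x c -> exists y, lt y b /\ sat (scons y (scons x env)) th) /\
    ((exists y, sat (scons y (scons x env)) th) -> bitin E x c).
Proof.
destruct (f_exp a) as [m0 hm0]. set (A := f a) in *. set (P := f m0) in *.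
set (Qc := fun c => lt c P /\ exists b, forall x, lt x A -> bitin E x c -> exists y, lt y b /\ sat (scons y (scons x env)) th).
assert (Hmax : exists c, Qc c /\ forall c', Qc c' -> ~ lt c c').
{ apply NNPP. intros Hn.
  assert (Hup : forall c, Qc c -> exists c', Qc c' /\ lt c c').
  { intros c hc. apply NNPP. intros h'. apply Hn. exists c. split; auto. intros c' hc' hlt. apply h'. eauto. }
  assert (L0 : PD K n (fun e5 => sat (fun v => e5 (r2 7 v)) th)) by (apply (PD_ren K n (r2 7) (fun e => sat e th)); apply PD_sat; auto).
  assert (L1 : PD K n (fun e4 => exists y, lt y (eval e4 (Var 1)) /\ sat (fun v => scons y e4 (r2 7 v)) th)).
  { apply (PD_bex K n HKn n (Var 1) (fun e5 => sat (fun v => e5 (r2 7 v)) th)); auto. }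
  assert (L2 : PD K n (fun e4 => bitin E (e4 0) (e4 2) -> exists y, lt y (eval e4 (Var 1)) /\ sat (fun v => scons y e4 (r2 7 v)) th)).
  { apply PD_impD; auto. apply D0d_bit; auto. }
  assert (L3 : PD K n (fun e3 => forall x, lt x (eval e3 (Var 4)) -> bitin E (scons x e3 0) (scons x e3 2) -> exists y, lt y (eval (scons x e3) (Var 1)) /\ sat (fun v => scons y (scons x e3) (r2 7 v)) th)).
  { apply (PD_ball K n HKn n (Var 4) (fun e4 => bitin E (e4 0) (e4 2) -> exists y, lt y (eval e4 (Var 1)) /\ sat (fun v => scons y e4 (r2 7 v)) th)); auto. }
  apply PD_SD in L3. apply SD_ex in L3.
  assert (L5 : SD K (S n) (fun e2 => ((lt (eval e2 (Var 1)) (eval e2 (Var 0)) \/ eval e2 (Var 1) = eval e2 (Var 0)) /\ lt (eval e2 (Var 0)) (eval e2 (Var 2))) /\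
     exists b, (fun e3 => forall x, lt x (eval e3 (Var 4)) -> bitin E (scons x e3 0) (scons x e3 2) -> exists y, lt y (eval (scons x e3) (Var 1)) /\ sat (fun v => scons y (scons x e3) (r2 7 v)) th) (scons b e2))).
  { apply SD_andD; auto. apply D0d_and. apply D0d_or. apply D0d_lt. apply D0d_eq. apply D0d_lt. }
  apply SD_ex in L5.
  assert (ind := Mind HI _ L5 (scons P (scons A env)) (add m0 one)).
  rewrite f_succ in ind. fold P in ind.
  assert (Hz : forall z, lt z (add P one) -> exists c, le z c /\ Qc c).
  { intros z hz. destruct (ind) with (x := z) as [c [[h1 h2] h3]]; auto.
    - simpl. exists zero. split. split. right; auto. apply (expos _ _ hm0).
      exists zero. intros x _ hb. exfalso; apply (nb0 x hb).
    - intros x hx H. simpl in H |- *. setoid_rewrite sat_r2_7 in H. setoid_rewrite sat_r2_7.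
      destruct H as [c [[h1 h2] h3]]. destruct (Hup c (conj h2 h3)) as [c' [[h4 h5] h6]].
      exists c'. split. split; auto. apply lt_le_succ. eapply le_lt_trans; [exact h1|exact h6]. exact h5.
    - exists c. split; [exact h1|]. split; [exact h2|]. simpl in h3. setoid_rewrite sat_r2_7 in h3. exact h3. }
  destruct (Hz P (lt_succ P)) as [c [h1 [h2 _]]]. apply (le_not_lt _ _ h1 h2). }
destruct Hmax as [c [[hcP [b hb]] hmax]].
exists c, b. intros x hx. split. apply hb; auto.
intros [y0 hy0]. apply NNPP. intros hnb.
destruct (hT x) as [p hp].
apply (hmax (add c p)).
- split. apply (G1' A P c x p); auto.
  exists (add b (add y0 one)). intros x' hx' hb'.
  destruct (classic (x' = x)) as [ex|nx].
  + subst x'. exists y0. split; [apply ltpr|exact hy0].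
  + destruct (hb x' hx' (G2' x p c x' hp hnb nx hb')) as [y [hy hy']]. exists y; split; [apply ltpl; exact hy|exact hy'].
- apply lt_add_pos. apply (expos _ _ hp).
Qed.


Definition cond_i := M_ISigma (S n) M K f.
Definition cond_ii :=
    forall (p : formula), Sigma (S n) p -> forall (env : nat -> K) (a : M),
      exists c : K, forall x : K, lt x (f a) ->
        (sat (scons x env) p <-> bitin E x c).
Definition cond_iii :=
    forall (theta : formula), Pi n theta -> forall (env : nat -> K) (a : M),
      exists b : K, forall x : K, lt x (f a) ->
        ((exists y : K, sat (scons y (scons x env)) theta) <->
         (exists y : K, lt y b /\ sat (scons y (scons x env)) theta)).

Lemma i_iii : cond_i -> cond_iii.
Proof.
intros HI th hth env a. destruct (core HI th hth env a) as [c [b hcb]].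
exists b. intros x hx. destruct (hcb x hx) as [h1 h2]. split.
- intros h. apply h1, h2, h.
- intros [y [_ hy]]. eauto.
Qed.

Lemma i_ii : cond_i -> cond_ii.
Proof.
intros HI p hp env a. destruct (contract p hp) as [th [hth eth]].
destruct (core HI th hth env a) as [c [b hcb]].
exists c. intros x hx. destruct (hcb x hx) as [h1 h2]. rewrite eth. split.
- intros h. apply h2, h.
- intros h. destruct (h1 h) as [y [_ hy]]. eauto.
Qed.

Lemma ii_i : cond_ii -> cond_i.
Proof.
intros H2 p hp env a h0 hs x hx.
destruct (H2 p hp env a) as [c hc].
assert (ind := Kind K n HKn 0 (fun e => lt (eval e (Var 0)) (eval e (Var 1)) -> bitin E (e 0) (e 2)) ltac:(lia)
   (D0d_SD K 0 _ (D0d_imp K _ _ (D0d_lt K (Var 0) (Var 1)) (D0d_bit E hE 0 2))) (scons (f a) (scons c env))).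
simpl in ind.
assert (Hb : forall z, lt z (f a) -> bitin E z c).
{ apply ind.
  - intros h. apply hc; auto.
  - intros z IH hz1. assert (hz : lt z (f a)) by (eapply ltT; [apply lt_succ|exact hz1]).
    apply hc; auto. apply hs; auto. apply hc; auto. }
apply hc; auto.
Qed.

Lemma sat_r2_5 th (w u z x0 b : K) (env : nat -> K) : sat (fun v => scons w (scons u (scons z (scons x0 (scons b env)))) (r2 5 v)) th <-> sat (scons w (scons u env)) th.
Proof. apply sat_ext. intros [|[|v]]; reflexivity. Qed.

Lemma iii_i : cond_iii -> cond_i.
Proof.
intros H3 p hp env a h0 hs.
destruct (contract p hp) as [th [hth eth]].
destruct (H3 th hth env (add a one)) as [b hb]. rewrite f_succ in hb.
set (At := fun u => exists w, lt w b /\ sat (scons w (scons u env)) th).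
assert (eqA : forall u, lt u (add (f a) one) -> (sat (scons u env) p <-> At u)).
{ intros u hu. rewrite eth. apply hb; auto. }
intros x0 hx0. apply NNPP; intros hn.
assert (hx0' : lt x0 (add (f a) one)) by (eapply ltT; [exact hx0|apply lt_succ]).
assert (hnA : ~ At x0) by (rewrite <- eqA; auto).
assert (N0 : PD K n (fun e4 => sat (fun v => e4 (r2 5 v)) th)) by (apply (PD_ren K n (r2 5) (fun e => sat e th)); apply PD_sat; auto).
assert (N1 : PD K n (fun e3 => exists w, lt w (eval e3 (Var 3)) /\ sat (fun v => scons w e3 (r2 5 v)) th)).
{ apply (PD_bex K n HKn n (Var 3) (fun e4 => sat (fun v => e4 (r2 5 v)) th)); auto. }
apply PD_not in N1.
assert (N3 : SD K n (fun e3 => eval e3 (Add (Var 0) (Var 1)) = eval e3 (Var 2) /\ ~ exists w, lt w (eval e3 (Var 3)) /\ sat (fun v => scons w e3 (r2 5 v)) th)).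
{ apply SD_andD; auto. apply D0d_eq. }
assert (N4 : SD K n (fun e2 => exists u, lt u (eval e2 (Add (Var 1) One)) /\ (fun e3 => eval e3 (Add (Var 0) (Var 1)) = eval e3 (Var 2) /\ ~ exists w, lt w (eval e3 (Var 3)) /\ sat (fun v => scons w e3 (r2 5 v)) th) (scons u e2))).
{ apply (SD_bex K n HKn n (Add (Var 1) One) (fun e3 => eval e3 (Add (Var 0) (Var 1)) = eval e3 (Var 2) /\ ~ exists w, lt w (eval e3 (Var 3)) /\ sat (fun v => scons w e3 (r2 5 v)) th)); auto. }
assert (N5 : SD K n (fun e2 => (lt (eval e2 (Var 0)) (eval e2 (Var 1)) \/ eval e2 (Var 0) = eval e2 (Var 1)) -> exists u, lt u (eval e2 (Add (Var 1) One)) /\ (fun e3 => eval e3 (Add (Var 0) (Var 1)) = eval e3 (Var 2) /\ ~ exists w, lt w (eval e3 (Var 3)) /\ sat (fun v => scons w e3 (r2 5 v)) th) (scons u e2))).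
{ apply SD_impD; auto. apply D0d_or; [apply D0d_lt|apply D0d_eq]. }
assert (ind := Kind K n HKn n _ (le_n n) N5 (scons x0 (scons b env))).
simpl in ind. setoid_rewrite sat_r2_5 in ind.
assert (HC : forall z, le z x0 -> exists u, lt u (add x0 one) /\ add u z = x0 /\ ~ At u).
{ intros z. apply ind.
  - intros _. exists x0. split. apply lt_succ. split. ring. exact hnA.
  - clear z. intros z IH hz1.
    assert (hz : le z x0) by (left; eapply lt_le_trans; [apply lt_succ|exact hz1]).
    destruct (IH hz) as [u [hu [eu nA]]].
    destruct (le0 u) as [hu0|hu0].
    + destruct (pos_pred u hu0) as [u' eu']. subst u. exists u'. split.
      * apply le_lt_succ. rewrite <- eu. eapply le_trans; [apply le_add_r|]. apply le_add_r.
      * split. rewrite <- eu. ring.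
        intros hA'. apply nA.
        assert (hux : le (add u' one) x0) by (rewrite <- eu; apply le_add_r).
        assert (hu'a : lt u' (f a)) by (eapply lt_le_trans; [apply lt_succ|]; eapply le_trans; [exact hux|left; exact hx0]).
        apply eqA. eapply le_lt_trans; [exact hux|exact hx0'].
        apply hs; auto. apply eqA; auto. eapply ltT; [exact hu'a|apply lt_succ].
    + subst u. exfalso. assert (ez : z = x0) by (rewrite <- eu; ring). subst z.
      apply (le_not_lt _ _ hz1). apply lt_succ. }
destruct (HC x0 (le_refl x0)) as [u [_ [eu nA]]].
assert (u = zero). { apply (add_cancel _ _ x0). rewrite eu. ring. } subst u.
apply nA. apply eqA; auto. apply le_lt_succ, le0.
Qed.

Lemma main_sec : (cond_i <-> cond_ii) /\ (cond_ii <-> cond_iii).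
Proof.
split; split; intros H.
- apply i_ii; auto.
- apply ii_i; auto.
- apply i_iii, ii_i; auto.
- apply i_ii, iii_i; auto.
Qed.

End Main.

Theorem lemma4p5 (n : nat) (M K : structure) (f : M -> K) (E : formula) :
  ExpFormula E ->
  IDelta0 M -> ExpGraph M E -> ExpTotal M E ->
  ISigma n K -> ExpGraph K E -> ExpTotal K E ->
  end_extension M K f ->
  let cond_i := M_ISigma (S n) M K f in
  let cond_ii :=
    forall (p : formula), Sigma (S n) p -> forall (env : nat -> K) (a : M),
      exists c : K, forall x : K, lt x (f a) ->
        (sat (scons x env) p <-> bitin E x c) in
  let cond_iii :=
    (* theta(x,y): y is de Bruijn variable 0, x is variable 1 *)
    forall (theta : formula), Pi n theta -> forall (env : nat -> K) (a : M),
      exists b : K, forall x : K, lt x (f a) ->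
        ((exists y : K, sat (scons y (scons x env)) theta) <->
         (exists y : K, lt y b /\ sat (scons y (scons x env)) theta)) in
  (cond_i <-> cond_ii) /\ (cond_ii <-> cond_iii).
Proof.
intros hE hM hGM hTM HKn hG hT Hf cond_i cond_ii cond_iii.
exact (main_sec n M K f E hE hTM HKn hG hT Hf).
Qed.
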